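(* For $\omega>0$ small and any $h$ in the Schwartz space $\mathcal{S}(\mathbb{R})$, \[ \int(2yh'+h)Kh=4\int(h'')^2+4\int(h')^2+\int Y_1(h')^2+\int Y_0h^2, \] where $Y_1=-2K_2-yK_2'+2yK_1$ and $Y_0=\tfrac12(K_2''-K_1'-2yK_0')$, and these satisfy $|\partial_y^kY_1|+|\partial_y^kY_0|\lesssim\omega e^{-|y|}$ on $\mathbb{R}$ for all $k\ge0$.
   Context: Let $Q_\omega(y)=\sqrt{4/(1+a_\omega\cosh 2y)}$, $a_\omega=\sqrt{1+\tfrac{16}{3}\omega}$, $M_+=-\partial_y^2+1+\tfrac{\omega}{3}Q_\omega^4$, $M_-=-\partial_y^2+1-\omega Q_\omega^4$. For small $\omega>0$, $\alpha=\alpha(\omega)>0$ is smooth with $\alpha=\tfrac89\omega+O(\omega^2)$, $\lambda=1-\alpha^2$, $\kappa=\sqrt{2-\alpha^2}$, and $W_1,W_2$ are smooth real functions, even in $y$, with $M_+W_1=\lambda W_2$, $M_-W_2=\lambda W_1$, and for $j=1,2$, $k\ge0$: $|\partial_y^kW_j|\lesssim\omega^ke^{-\alpha|y|}+\omega e^{-|y|}$, $|\partial_y^k(W_1-W_2)|\lesssim\omega e^{-\kappa|y|}$, $|W_j-e^{-\alpha|y|}|\lesssim\omega e^{-\alpha|y|}$. With $U=\partial_y-W_2'/W_2$, the operator $K=\partial_y^4-2\partial_y^2+K_2\partial_y^2+K_1\partial_y+K_0+1$ is the fourth-order differential operator (with smooth coefficients $K_2,K_1,K_0$ uniquely determined)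 satisfying $UM_+M_-=KU$; its coefficients satisfy $|\partial_y^kK_i|\lesssim\omega e^{-(\kappa-\alpha)|y|}$. $\lesssim$ means $\le C\,\cdot$ with $C$ independent of $\omega,y$. *)

(* Defs.v *)
From Stdlib Require Import Reals.
From Coquelicot Require Import Coquelicot.
Open Scope R_scope.

Definition smooth (f : R -> R) : Prop := forall (n : nat) (y : R), ex_derive_n f n y.

Definition schwartz (h : R -> R) : Prop :=
  smooth h /\ forall m n : nat, exists C : R, forall x : R, Rabs (x ^ m * Derive_n h n x) <= C.

Definition integrable_R (f : R -> R) : Prop :=
  ex_RInt_gen f (Rbar_locally m_infty) (Rbar_locally p_infty).
Definition integral_R (f : R -> R) : R :=
  RInt_gen f (Rbar_locally m_infty) (Rbar_locally p_infty).

Definition a_om (w : R) : R := sqrt (1 + 16 / 3 * w).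
Definition Q (w y : R) : R := sqrt (4 / (1 + a_om w * cosh (2 * y))).

Definition Mplus_op (w : R) (f : R -> R) (y : R) : R :=
  - Derive_n f 2 y + f y + w / 3 * Q w y ^ 4 * f y.
Definition Mminus_op (w : R) (f : R -> R) (y : R) : R :=
  - Derive_n f 2 y + f y - w * Q w y ^ 4 * f y.

Definition Uop (W2 : R -> R) (f : R -> R) (y : R) : R :=
  Derive f y - Derive W2 y / W2 y * f y.

Definition Kop (K2 K1 K0 : R -> R) (g : R -> R) (y : R) : R :=
  Derive_n g 4 y - 2 * Derive_n g 2 y + K2 y * Derive_n g 2 y
  + K1 y * Derive g y + K0 y * g y + g y.

Definition Y1 (K2 K1 : R -> R) (y : R) : R :=
  -2 * K2 y - y * Derive K2 y + 2 * y * K1 y.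
Definition Y0 (K2 K1 K0 : R -> R) (y : R) : R :=
  / 2 * (Derive_n K2 2 y - Derive K1 y - 2 * y * Derive K0 y).

(* Main.v *)
Require Import Defs.
From Stdlib Require Import Reals Lra.
From Coquelicot Require Import Coquelicot.
Open Scope R_scope.
Definition bnd (f : R -> R) := exists C, forall y, Rabs (f y) <= C.
Definition dec (f : R -> R) := exists C, forall y, Rabs (f y) * (1 + y ^ 2) <= C.

Lemma dec_pt f C y : (forall y, Rabs (f y) * (1 + y ^ 2) <= C) -> Rabs (f y) * y ^ 2 <= C.
Proof. intros H. specialize (H y). pose proof (Rabs_pos (f y)). nra. Qed.

Lemma RInt_inv2 C x y : 0 < x \/ y < 0 -> x <= y ->
  is_RInt (fun t => C / t ^ 2) x y (C / x - C / y).
Proof.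
  intros Hs Hxy.
  assert (Hnz : forall t, Rmin x y <= t <= Rmax x y -> t <> 0).
  { intros t Ht. rewrite Rmin_left in Ht by lra. rewrite Rmax_right in Ht by lra. lra. }
  replace (C / x - C / y) with (minus ((fun t => - C / t) y) ((fun t => - C / t) x))
    by (unfold minus, plus, opp; simpl; field; split; lra).
  apply (is_RInt_derive (fun t => - C / t) (fun t => C / t ^ 2)).
  - intros t Ht. specialize (Hnz t Ht). auto_derive; auto. field; auto.
  - intros t Ht. specialize (Hnz t Ht). apply (ex_derive_continuous (fun t => C / t ^ 2)). auto_derive. auto.
Qed.

Lemma tail_bound (f : R -> R) C M : 1 <= M -> (forall x, continuous f x) ->
  (forall y, Rabs (f y) * (1 + y ^ 2) <= C) ->
  forall x y, (M <= x /\ M <= y) \/ (x <= -M /\ y <= -M) -> Rabs (RInt f x y) <= C / M.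
Proof.
  intros HM Hc Hd.
  assert (HC : 0 <= C). { specialize (Hd 0). pose proof (Rabs_pos (f 0)). nra. }
  assert (key : forall x y, x <= y -> (M <= x /\ M <= y) \/ (x <= -M /\ y <= -M) ->
            Rabs (RInt f x y) <= C / M).
  { intros x y Hxy Hs.
    assert (Hs' : 0 < x \/ y < 0) by lra.
    pose proof (RInt_inv2 C x y Hs' Hxy) as Hi.
    assert (Hex : ex_RInt f x y) by (apply (ex_RInt_continuous (V:=R_CompleteNormedModule)); auto).
    assert (Hb : forall t, x < t < y -> Rabs (f t) <= C / t ^ 2).
    { intros t Ht. assert (0 < t ^ 2) by (apply pow2_gt_0; lra).
      pose proof (dec_pt f C t Hd). apply Rmult_le_reg_r with (t ^ 2); auto.
      unfold Rdiv. rewrite Rmult_assoc, Rinv_l; lra. }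
    assert (H1 : RInt f x y <= RInt (fun t => C / t ^ 2) x y).
    { apply RInt_le; auto. eexists; eauto. intros t Ht. specialize (Hb t Ht).
      apply Rabs_le_between in Hb. lra. }
    assert (H2 : RInt (fun t => - (C / t ^ 2)) x y <= RInt f x y).
    { apply RInt_le; auto. eexists. apply (is_RInt_opp _ _ _ _ Hi).
      intros t Ht. specialize (Hb t Ht). apply Rabs_le_between in Hb. lra. }
    rewrite (is_RInt_unique _ _ _ _ Hi) in H1.
    rewrite (is_RInt_unique (fun t => - (C / t ^ 2)) _ _ _ (is_RInt_opp _ _ _ _ Hi)) in H2.
    assert (C / x - C / y <= C / M).
    { destruct Hs as [[Ha Hb'] | [Ha Hb']].
      - assert (0 <= C / y) by (apply Rdiv_le_0_compat; lra).
        assert (C / x <= C / M).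
        { unfold Rdiv. apply Rmult_le_compat_l; auto. apply Rinv_le_contravar; lra. }
        lra.
      - assert (C / x <= 0). { unfold Rdiv. assert (/ x < 0) by (apply Rinv_lt_0_compat; lra). nra. }
        assert (- (C / y) <= C / M).
        { replace (- (C / y)) with (C / (- y)) by (field; lra).
          unfold Rdiv. apply Rmult_le_compat_l; auto. apply Rinv_le_contravar; lra. }
        lra. }
    unfold opp in H2; simpl in H2. apply Rabs_le. lra. }
  intros x y Hs. destruct (Rle_dec x y) as [Hxy | Hxy].
  - apply key; auto.
  - rewrite <- opp_RInt_swap by (apply (ex_RInt_continuous (V:=R_CompleteNormedModule)); auto).
    unfold opp; simpl. rewrite Rabs_Ropp. apply key; [lra | tauto].
Qed.

Lemma dec_integrable (f : R -> R) : (forall x, continuous f x) -> dec f ->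
  ex_RInt_gen f (Rbar_locally m_infty) (Rbar_locally p_infty).
Proof.
  intros Hc [C Hd].
  assert (HC : 0 <= C). { specialize (Hd 0). pose proof (Rabs_pos (f 0)). nra. }
  unfold ex_RInt_gen, is_RInt_gen.
  refine (proj1 (filterlimi_locally_cauchy (F := filter_prod (Rbar_locally m_infty) (Rbar_locally p_infty)) (U := R_CompleteSpace) (fun ab => is_RInt f (fst ab) (snd ab)) _) _).
  - apply filter_forall. intros [a b]. simpl. split.
    + apply (ex_RInt_continuous (V:=R_CompleteNormedModule) f a b). intros; auto.
    + intros y1 y2 H1 H2. rewrite <- (is_RInt_unique _ _ _ _ H1). rewrite <- (is_RInt_unique _ _ _ _ H2). auto.
  - intros eps.
    set (M := 1 + 2 * C / eps).
    assert (HM : 1 <= M). { unfold M. assert (0 <= 2 * C / eps). apply Rdiv_le_0_compat. lra. apply cond_pos. lra. }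
    assert (HCM : C / M < eps / 2).
    { pose proof (cond_pos eps). apply Rmult_lt_reg_r with M. lra. unfold Rdiv.
      rewrite Rmult_assoc, Rinv_l by lra. unfold M. field_simplify; lra. }
    exists (fun ab => fst ab < - M /\ M < snd ab). split.
    + exists (fun a => a < - M) (fun b => M < b).
      * exists (- M). auto.
      * exists M. auto.
      * intros a b Ha Hb. simpl. auto.
    + intros [a b] [a' b'] [Ha Hb] [Ha' Hb'] u' v' Hu Hv. simpl in *.
      rewrite <- (is_RInt_unique _ _ _ _ Hu). rewrite <- (is_RInt_unique _ _ _ _ Hv).
      change (Rabs (RInt f a' b' - RInt f a b) < eps).
      assert (Hex : forall x y, ex_RInt f x y) by (intros; apply (ex_RInt_continuous (V:=R_CompleteNormedModule)); auto).
      rewrite <- (RInt_Chasles f a' a b') by auto.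
      rewrite <- (RInt_Chasles f a b b') by auto.
      change (Rabs (RInt f a' a + (RInt f a b + RInt f b b') - RInt f a b) < eps).
      pose proof (tail_bound f C M HM Hc Hd a' a (or_intror (conj (Rlt_le _ _ Ha') (Rlt_le _ _ Ha)))).
      pose proof (tail_bound f C M HM Hc Hd b b' (or_introl (conj (Rlt_le _ _ Hb) (Rlt_le _ _ Hb')))).
      replace (RInt f a' a + (RInt f a b + RInt f b b') - RInt f a b) with (RInt f a' a + RInt f b b') by ring.
      eapply Rle_lt_trans. apply Rabs_triang. lra.
Qed.
Lemma bnd_mult f g : bnd f -> bnd g -> bnd (fun y => f y * g y).
Proof. intros [A HA] [B HB]. exists (A * B). intros y. rewrite Rabs_mult.
  specialize (HA y); specialize (HB y). pose proof (Rabs_pos (f y)); pose proof (Rabs_pos (g y)).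
  apply Rmult_le_compat; auto. Qed.
Lemma bnd_scal c f : bnd f -> bnd (fun y => c * f y).
Proof. intros H. apply bnd_mult; auto. exists (Rabs c). intros; lra. Qed.
Lemma dec_bnd f : dec f -> bnd f.
Proof. intros [C H]. exists C. intros y. specialize (H y). pose proof (Rabs_pos (f y)).
  pose proof (pow2_ge_0 y). nra. Qed.
Lemma dec_mult f g : bnd f -> dec g -> dec (fun y => f y * g y).
Proof. intros [A HA] [B HB]. exists (A * B). intros y. rewrite Rabs_mult.
  specialize (HA y); specialize (HB y). pose proof (Rabs_pos (f y)); pose proof (Rabs_pos (g y)).
  pose proof (pow2_ge_0 y). rewrite Rmult_assoc.
  apply Rmult_le_compat; auto. nra. Qed.
Lemma dec_plus f g : dec f -> dec g -> dec (fun y => f y + g y).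
Proof. intros [A HA] [B HB]. exists (A + B). intros y.
  specialize (HA y); specialize (HB y). pose proof (Rabs_triang (f y) (g y)).
  pose proof (pow2_ge_0 y). nra. Qed.
Lemma dec_opp f : dec f -> dec (fun y => - f y).
Proof. intros [A HA]. exists A. intros y. rewrite Rabs_Ropp. auto. Qed.
Lemma dec_minus f g : dec f -> dec g -> dec (fun y => f y - g y).
Proof. intros. apply dec_plus; auto. apply dec_opp; auto. Qed.
Lemma dec_ext f g : dec f -> (forall y, f y = g y) -> dec g.
Proof. intros [A HA] E. exists A. intros y. rewrite <- E. auto. Qed.

Lemma dec_lim f : dec f -> filterlim f (Rbar_locally p_infty) (locally 0) /\
   filterlim f (Rbar_locally m_infty) (locally 0).
Proof.
  intros [C HC].
  assert (H0 : 0 <= C). { specialize (HC 0). pose proof (Rabs_pos (f 0)). nra. }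
  assert (K : forall eps : posreal, forall x, 1 + C / eps < Rabs x -> Rabs (f x - 0) < eps).
  { intros eps x Hx. pose proof (cond_pos eps). rewrite Rminus_0_r.
    assert (0 <= C / eps) by (apply Rdiv_le_0_compat; lra).
    assert (C < eps * x ^ 2).
    { assert (C = eps * (C / eps)) by (field; lra).
      assert (x ^ 2 = Rabs x * Rabs x). { rewrite <- Rabs_mult. simpl. rewrite Rmult_1_r. rewrite Rabs_right; auto. apply Rle_ge. apply Rle_0_sqr. }
      assert (Rabs x * Rabs x > C / eps) by nra.
      rewrite H3, H2 at 1. apply Rmult_lt_compat_l; lra. }
    specialize (HC x). pose proof (Rabs_pos (f x)).
    destruct (Rlt_dec (Rabs (f x)) eps); auto.
    assert (eps * (1 + x ^ 2) <= Rabs (f x) * (1 + x ^ 2)).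
    { apply Rmult_le_compat_r. pose proof (pow2_ge_0 x); lra. lra. }
    lra. }
  split; apply filterlim_locally; intros eps;
  assert (0 <= C / eps) by (apply Rdiv_le_0_compat; [lra | apply cond_pos]).
  - exists (1 + C / eps). intros x Hx. apply K. rewrite Rabs_right; lra.
  - exists (- (1 + C / eps)). intros x Hx. apply K. rewrite Rabs_left; lra.
Qed.

Lemma int_deriv_zero (F dF : R -> R) : (forall x, is_derive F x (dF x)) ->
  (forall x, continuous dF x) -> dec F ->
  is_RInt_gen dF (Rbar_locally m_infty) (Rbar_locally p_infty) 0.
Proof.
  intros HD HC Hdec. destruct (dec_lim F Hdec) as [Hp Hm].
  replace 0 with (0 - 0) by ring.
  apply (is_RInt_gen_ext (Derive F)).
  - apply filter_forall. intros. apply is_derive_unique; auto.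
  - apply is_RInt_gen_Derive; auto.
    + apply filter_forall. intros. eexists; eauto.
    + apply filter_forall. intros. eapply continuous_ext. intros t. symmetry. apply is_derive_unique; auto. auto.
Qed.

Lemma schw_bnd (h : R -> R) m n : (forall m n : nat, exists C : R, forall x : R, Rabs (x ^ m * Derive_n h n x) <= C) ->
  bnd (fun y => y ^ m * Derive_n h n y).
Proof. intros H. destruct (H m n) as [C HC]. exists C. auto. Qed.
Lemma schw_bnd0 (h : R -> R) n : (forall m n : nat, exists C : R, forall x : R, Rabs (x ^ m * Derive_n h n x) <= C) ->
  bnd (fun y => Derive_n h n y).
Proof. intros H. destruct (H 0%nat n) as [C HC]. exists C. intros y. specialize (HC y). simpl in HC. rewrite Rmult_1_l in HC. auto. Qed.
Lemma schw_bnd1 (h : R -> R) n : (forall m n : nat, exists C : R, forall x : R, Rabs (x ^ m * Derive_n h n x) <= C) ->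
  bnd (fun y => y * Derive_n h n y).
Proof. intros H. destruct (H 1%nat n) as [C HC]. exists C. intros y. specialize (HC y). simpl in HC. rewrite Rmult_1_r in HC. auto. Qed.
Lemma schw_dec (h : R -> R) n : (forall m n : nat, exists C : R, forall x : R, Rabs (x ^ m * Derive_n h n x) <= C) ->
  dec (fun y => Derive_n h n y).
Proof. intros H. destruct (H 0%nat n) as [A HA]. destruct (H 2%nat n) as [B HB]. exists (A + B).
  intros y. specialize (HA y). specialize (HB y). simpl in HA. rewrite Rmult_1_l in HA.
  rewrite Rabs_mult in HB. rewrite (Rabs_right (y ^ 2)) in HB by (apply Rle_ge, pow2_ge_0). nra. Qed.

Lemma abstract_identity (h0 h1 h2 h3 h4 k2 k2' k2'' k1 k1' k0 k0' : R -> R) :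
  (forall x, is_derive h0 x (h1 x)) -> (forall x, is_derive h1 x (h2 x)) ->
  (forall x, is_derive h2 x (h3 x)) -> (forall x, is_derive h3 x (h4 x)) ->
  (forall x, ex_derive h4 x) ->
  (forall x, is_derive k2 x (k2' x)) -> (forall x, is_derive k2' x (k2'' x)) ->
  (forall x, ex_derive k2'' x) ->
  (forall x, is_derive k1 x (k1' x)) -> (forall x, ex_derive k1' x) ->
  (forall x, is_derive k0 x (k0' x)) -> (forall x, ex_derive k0' x) ->
  dec h0 -> dec h1 -> dec h2 -> dec h3 ->
  bnd (fun y => y * h0 y) -> bnd (fun y => y * h1 y) -> bnd (fun y => y * h2 y) ->
  bnd k2 -> bnd k2' -> bnd k1 -> bnd k0 ->
  bnd (fun y => -2 * k2 y - y * k2' y + 2 * y * k1 y) ->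
  bnd (fun y => / 2 * (k2'' y - k1' y - 2 * y * k0' y)) ->
  let lhs := fun y => (2 * y * h1 y + h0 y) *
      (h4 y - 2 * h2 y + k2 y * h2 y + k1 y * h1 y + k0 y * h0 y + h0 y) in
  let i2 := fun y => (h2 y) ^ 2 in
  let i1 := fun y => (h1 y) ^ 2 in
  let iY1 := fun y => (-2 * k2 y - y * k2' y + 2 * y * k1 y) * (h1 y) ^ 2 in
  let iY0 := fun y => / 2 * (k2'' y - k1' y - 2 * y * k0' y) * (h0 y) ^ 2 in
  integrable_R lhs /\ integrable_R i2 /\ integrable_R i1 /\
  integrable_R iY1 /\ integrable_R iY0 /\
  integral_R lhs = 4 * integral_R i2 + 4 * integral_R i1 + integral_R iY1 + integral_R iY0.
Proof.
  intros D0 D1 D2 D3 E4 DK2 DK2' EK2 DK1 EK1 DK0 EK0 d0 d1 d2 d3 b0 b1 b2 bk2 bk2' bk1 bk0 bY1 bY0.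
  intros lhs i2 i1 iY1 iY0.
  assert (e0 : forall x, ex_derive h0 x) by (intros; eexists; eauto).
  assert (e1 : forall x, ex_derive h1 x) by (intros; eexists; eauto).
  assert (e2 : forall x, ex_derive h2 x) by (intros; eexists; eauto).
  assert (e3 : forall x, ex_derive h3 x) by (intros; eexists; eauto).
  assert (ek2 : forall x, ex_derive k2 x) by (intros; eexists; eauto).
  assert (ek2' : forall x, ex_derive k2' x) by (intros; eexists; eauto).
  assert (ek1 : forall x, ex_derive k1 x) by (intros; eexists; eauto).
  assert (ek0 : forall x, ex_derive k0 x) by (intros; eexists; eauto).
  set (F := fun y => h0 y * h3 y - h1 y * h2 y + 2 * (y * h1 y) * h3 y - 2 * (h1 y * h2 y)
      - (y * h2 y) * h2 y - 2 * (h0 y * h1 y) - 2 * (y * h1 y) * h1 y + (y * h0 y) * h0 y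
      + (k2 y * h0 y) * h1 y - (/ 2 * k2' y * h0 y) * h0 y + (k2 y * (y * h1 y)) * h1 y
      + (/ 2 * k1 y * h0 y) * h0 y + (k0 y * (y * h0 y)) * h0 y).
  set (Fd := fun y => lhs y - (4 * i2 y + 4 * i1 y + iY1 y + iY0 y)).
  assert (HF : forall x, is_derive F x (Fd x)).
  { intros x. unfold F, Fd, lhs, i2, i1, iY1, iY0. auto_derive.
    - repeat split; auto.
    - rewrite !(fun x => is_derive_unique _ _ _ (D0 x)), !(fun x => is_derive_unique _ _ _ (D1 x)),
        !(fun x => is_derive_unique _ _ _ (D2 x)), !(fun x => is_derive_unique _ _ _ (D3 x)),
        !(fun x => is_derive_unique _ _ _ (DK2 x)), !(fun x => is_derive_unique _ _ _ (DK1 x)),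
        !(fun x => is_derive_unique _ _ _ (DK0 x)).
      rewrite !(fun x => is_derive_unique _ _ _ (DK2' x)). field. }
  assert (cont : forall g : R -> R, (forall x, ex_derive g x) -> forall x, continuous g x)
    by (intros g Hg x; apply (ex_derive_continuous g); auto).
  assert (cFd : forall x, continuous Fd x).
  { apply cont. intros x. unfold Fd, lhs, i2, i1, iY1, iY0. auto_derive. repeat split; auto. }
  assert (ci2 : forall x, continuous i2 x).
  { apply cont. intros x. unfold i2. auto_derive. repeat split; auto. }
  assert (ci1 : forall x, continuous i1 x).
  { apply cont. intros x. unfold i1. auto_derive. repeat split; auto. }
  assert (ciY1 : forall x, continuous iY1 x).
  { apply cont. intros x. unfold iY1. auto_derive. repeat split; auto. }
  assert (ciY0 : forall x, continuous iY0 x).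
  { apply cont. intros x. unfold iY0. auto_derive. repeat split; auto. }
  assert (bc : forall c, bnd (fun _ => c)) by (intros c; exists (Rabs c); intros; lra).
  assert (dF : dec F).
  { unfold F.
    repeat first [ assumption | apply dec_minus | apply dec_plus | apply dec_opp | apply dec_mult
                 | apply dec_bnd; assumption | apply bc | apply bnd_mult ]. }
  assert (di2 : dec i2).
  { apply (dec_ext (fun y => h2 y * h2 y)). apply dec_mult; auto. apply dec_bnd; auto.
    intros; unfold i2; ring. }
  assert (di1 : dec i1).
  { apply (dec_ext (fun y => h1 y * h1 y)). apply dec_mult; auto. apply dec_bnd; auto.
    intros; unfold i1; ring. }
  assert (diY1 : dec iY1).
  { apply (dec_ext (fun y => ((-2 * k2 y - y * k2' y + 2 * y * k1 y) * h1 y) * h1 y)).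
    apply dec_mult; auto. apply bnd_mult; auto. apply dec_bnd; auto.
    intros; unfold iY1; ring. }
  assert (diY0 : dec iY0).
  { apply (dec_ext (fun y => ((/ 2 * (k2'' y - k1' y - 2 * y * k0' y)) * h0 y) * h0 y)).
    apply dec_mult; auto. apply bnd_mult; auto. apply dec_bnd; auto.
    intros; unfold iY0; ring. }
  pose proof (int_deriv_zero F Fd HF cFd dF) as IF.
  assert (Ii2 := RInt_gen_correct _ (dec_integrable i2 ci2 di2)).
  assert (Ii1 := RInt_gen_correct _ (dec_integrable i1 ci1 di1)).
  assert (IiY1 := RInt_gen_correct _ (dec_integrable iY1 ciY1 diY1)).
  assert (IiY0 := RInt_gen_correct _ (dec_integrable iY0 ciY0 diY0)).
  assert (Hall : is_RInt_gen lhs (Rbar_locally m_infty) (Rbar_locally p_infty)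
     (4 * integral_R i2 + 4 * integral_R i1 + integral_R iY1 + integral_R iY0)).
  { unfold integral_R.
    pose proof (is_RInt_gen_plus _ _ _ _ (is_RInt_gen_plus _ _ _ _
      (is_RInt_gen_plus _ _ _ _ (is_RInt_gen_plus _ _ _ _ (is_RInt_gen_scal _ 4 _ Ii2)
        (is_RInt_gen_scal _ 4 _ Ii1)) IiY1) IiY0) IF) as H.
    eapply is_RInt_gen_ext in H.
    - replace (4 * RInt_gen i2 (Rbar_locally m_infty) (Rbar_locally p_infty) +
        4 * RInt_gen i1 (Rbar_locally m_infty) (Rbar_locally p_infty) +
        RInt_gen iY1 (Rbar_locally m_infty) (Rbar_locally p_infty) +
        RInt_gen iY0 (Rbar_locally m_infty) (Rbar_locally p_infty)) with
        (plus (plus (plus (plus (scal 4 (RInt_gen i2 (Rbar_locally m_infty) (Rbar_locally p_infty)))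
          (scal 4 (RInt_gen i1 (Rbar_locally m_infty) (Rbar_locally p_infty))))
          (RInt_gen iY1 (Rbar_locally m_infty) (Rbar_locally p_infty)))
          (RInt_gen iY0 (Rbar_locally m_infty) (Rbar_locally p_infty))) 0).
      exact H.
      unfold plus, scal; simpl. unfold mult; simpl. ring.
    - apply filter_forall. intros ab x _. unfold plus, scal; simpl. unfold mult; simpl.
      unfold Fd. ring. }
  split; [eexists; exact Hall|].
  split; [eexists; exact Ii2|].
  split; [eexists; exact Ii1|].
  split; [eexists; exact IiY1|].
  split; [eexists; exact IiY0|].
  apply is_RInt_gen_unique; auto.
Qed.
Lemma Dn_S (f : R -> R) n x : Derive (Derive_n f n) x = Derive_n f (S n) x.
Proof. reflexivity. Qed.

Lemma smooth_ex (f : R -> R) n x : smooth f -> ex_derive (Derive_n f n) x.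
Proof. intros H. exact (H (S n) x). Qed.

Lemma Dn_Y1 (K2 K1 : R -> R) : smooth K2 -> smooth K1 -> forall k y,
  Derive_n (Y1 K2 K1) k y = -2 * Derive_n K2 k y - (y * Derive_n K2 (S k) y + INR k * Derive_n K2 k y)
    + 2 * (y * Derive_n K1 k y + INR k * Derive_n K1 (pred k) y).
Proof.
  intros S2 S1 k. induction k as [|k IH]; intros y.
  - simpl. unfold Y1. change (fun x : R => K2 x) with K2. ring.
  - change (Derive_n (Y1 K2 K1) (S k) y) with (Derive (Derive_n (Y1 K2 K1) k) y).
    rewrite (Derive_ext _ _ _ IH).
    apply is_derive_unique. auto_derive.
    + repeat split; first [apply (smooth_ex K2 k) | apply (smooth_ex K2 (S k)) | apply (smooth_ex K1 k)
        | apply (smooth_ex K1 (pred k))]; auto.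
    + repeat change (fun x => Derive (Derive_n ?f ?n) x) with (Derive_n f (S n)). rewrite !Dn_S. rewrite S_INR. destruct k; simpl pred; simpl INR; ring.
Qed.

Lemma Dn_Y0 (K2 K1 K0 : R -> R) : smooth K2 -> smooth K1 -> smooth K0 -> forall k y,
  Derive_n (Y0 K2 K1 K0) k y = / 2 * (Derive_n K2 (S (S k)) y - Derive_n K1 (S k) y
    - 2 * (y * Derive_n K0 (S k) y + INR k * Derive_n K0 k y)).
Proof.
  intros S2 S1 S0 k. induction k as [|k IH]; intros y.
  - unfold Y0. simpl. change (fun x : R => K1 x) with K1. change (fun x : R => K0 x) with K0. ring.
  - change (Derive_n (Y0 K2 K1 K0) (S k) y) with (Derive (Derive_n (Y0 K2 K1 K0) k) y).
    rewrite (Derive_ext _ _ _ IH).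
    apply is_derive_unique. auto_derive.
    + repeat split; first [apply (smooth_ex K2 (S (S k))) | apply (smooth_ex K1 (S k)) | apply (smooth_ex K0 k)
        | apply (smooth_ex K0 (S k))]; auto.
    + repeat change (fun x => Derive (Derive_n ?f ?n) x) with (Derive_n f (S n)). rewrite !Dn_S. rewrite S_INR. ring.
Qed.

Lemma exp_le_mono a b : a <= b -> exp a <= exp b.
Proof. intros H. destruct (Rle_lt_or_eq_dec a b H) as [H'|H']. apply Rlt_le, exp_increasing; auto. subst; lra. Qed.

Lemma yexp c y : 11/10 <= c -> Rabs y * exp (- c * Rabs y) <= 10 * exp (- Rabs y).
Proof.
  intros Hc. pose proof (Rabs_pos y) as Hy.
  replace (- c * Rabs y) with (- Rabs y + - ((c - 1) * Rabs y)) by ring.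
  rewrite exp_plus.
  assert (exp (- ((c - 1) * Rabs y)) <= exp (- (Rabs y / 10))).
  { apply exp_le_mono. nra. }
  assert (Rabs y * exp (- (Rabs y / 10)) <= 10).
  { rewrite exp_Ropp. pose proof (exp_ineq1_le (Rabs y / 10)). pose proof (exp_pos (Rabs y / 10)).
    apply Rmult_le_reg_r with (exp (Rabs y / 10)); auto.
    rewrite Rmult_assoc, Rinv_l by lra. lra. }
  pose proof (exp_pos (- Rabs y)).
  assert (Rabs y * exp (- ((c - 1) * Rabs y)) <= 10).
  { eapply Rle_trans; [|eassumption]. apply Rmult_le_compat_l; auto. }
  replace (Rabs y * (exp (- Rabs y) * exp (- ((c - 1) * Rabs y)))) with
    ((Rabs y * exp (- ((c - 1) * Rabs y))) * exp (- Rabs y)) by ring.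
  apply Rmult_le_compat_r; lra.
Qed.

Lemma exp_mono_c c y : 1 <= c -> exp (- c * Rabs y) <= exp (- Rabs y).
Proof. intros Hc. pose proof (Rabs_pos y). apply exp_le_mono. nra. Qed.

Lemma qb q C w c y : 0 < w -> 11/10 <= c -> Rabs q <= C * w * exp (- c * Rabs y) ->
  - (Rabs C * w * exp (- Rabs y)) <= q <= Rabs C * w * exp (- Rabs y) /\
  - (10 * Rabs C * w * exp (- Rabs y)) <= y * q <= 10 * Rabs C * w * exp (- Rabs y).
Proof.
  intros Hw Hc Hq. pose proof (exp_pos (- c * Rabs y)) as HE. pose proof (exp_pos (- Rabs y)).
  pose proof (exp_mono_c c y ltac:(lra)). pose proof (yexp c y Hc).
  pose proof (Rabs_pos C). pose proof (Rle_abs C). pose proof (Rabs_pos q).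
  assert (Hq1 : Rabs q <= Rabs C * w * exp (- c * Rabs y)).
  { eapply Rle_trans; [eassumption|]. apply Rmult_le_compat_r; [lra|]. apply Rmult_le_compat_r; lra. }
  assert (Hq2 : Rabs q <= Rabs C * w * exp (- Rabs y)).
  { eapply Rle_trans; [eassumption|]. apply Rmult_le_compat_l; nra. }
  assert (Hq3 : Rabs (y * q) <= 10 * Rabs C * w * exp (- Rabs y)).
  { rewrite Rabs_mult.
    apply Rle_trans with (Rabs y * (Rabs C * w * exp (- c * Rabs y))).
    apply Rmult_le_compat_l; auto. apply Rabs_pos.
    replace (Rabs y * (Rabs C * w * exp (- c * Rabs y))) with ((Rabs C * w) * (Rabs y * exp (- c * Rabs y))) by ring.
    replace (10 * Rabs C * w * exp (- Rabs y)) with ((Rabs C * w) * (10 * exp (- Rabs y))) by ring.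
    apply Rmult_le_compat_l; nra. }
  split; apply Rabs_le_between; auto.
Qed.

Lemma kq (k : nat) q M : - M <= q <= M -> - (INR k * M) <= INR k * q <= INR k * M.
Proof. pose proof (pos_INR k). intros. split; nra. Qed.

Lemma Ybound (K2 K1 K0 : R -> R) (w c a b p c2 : R) (k : nat) y :
  smooth K2 -> smooth K1 -> smooth K0 -> 0 < w -> 11/10 <= c ->
  (Rabs (Derive_n K2 k y) <= a * w * exp (- c * Rabs y) /\
   Rabs (Derive_n K1 k y) <= a * w * exp (- c * Rabs y) /\
   Rabs (Derive_n K0 k y) <= a * w * exp (- c * Rabs y)) ->
  (Rabs (Derive_n K2 (S k) y) <= b * w * exp (- c * Rabs y) /\
   Rabs (Derive_n K1 (S k) y) <= b * w * exp (- c * Rabs y) /\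
   Rabs (Derive_n K0 (S k) y) <= b * w * exp (- c * Rabs y)) ->
  (Rabs (Derive_n K2 (pred k) y) <= p * w * exp (- c * Rabs y) /\
   Rabs (Derive_n K1 (pred k) y) <= p * w * exp (- c * Rabs y) /\
   Rabs (Derive_n K0 (pred k) y) <= p * w * exp (- c * Rabs y)) ->
  (Rabs (Derive_n K2 (S (S k)) y) <= c2 * w * exp (- c * Rabs y) /\
   Rabs (Derive_n K1 (S (S k)) y) <= c2 * w * exp (- c * Rabs y) /\
   Rabs (Derive_n K0 (S (S k)) y) <= c2 * w * exp (- c * Rabs y)) ->
  Rabs (Derive_n (Y1 K2 K1) k y) + Rabs (Derive_n (Y0 K2 K1 K0) k y) <=
  (22 * Rabs a + 31 * Rabs b + Rabs c2 + INR k * (3 * Rabs a + 2 * Rabs p)) * w * exp (- Rabs y).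
Proof.
  intros S2 S1 S0 Hw Hc [A2 [A1 A0]] [B2 [B1 B0]] [P2 [P1 P0]] [C2 [C1 C0]].
  rewrite (Dn_Y1 K2 K1 S2 S1 k y), (Dn_Y0 K2 K1 K0 S2 S1 S0 k y).
  destruct (qb _ _ _ _ _ Hw Hc A2) as [a2 ya2].
  destruct (qb _ _ _ _ _ Hw Hc A1) as [a1 ya1].
  destruct (qb _ _ _ _ _ Hw Hc A0) as [a0 ya0].
  destruct (qb _ _ _ _ _ Hw Hc B2) as [b2 yb2].
  destruct (qb _ _ _ _ _ Hw Hc B1) as [b1 yb1].
  destruct (qb _ _ _ _ _ Hw Hc B0) as [b0 yb0].
  destruct (qb _ _ _ _ _ Hw Hc P1) as [p1 yp1].
  destruct (qb _ _ _ _ _ Hw Hc C2) as [c22 yc2].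
  pose proof (kq k _ _ a2). pose proof (kq k _ _ p1). pose proof (kq k _ _ a0).
  apply Rle_trans with ((2 * Rabs a + 10 * Rabs b + INR k * Rabs a + 20 * Rabs a + 2 * INR k * Rabs p) * w * exp (- Rabs y)
     + / 2 * (Rabs c2 + Rabs b + 20 * Rabs b + 2 * INR k * Rabs a) * w * exp (- Rabs y)).
  - apply Rplus_le_compat; apply Rabs_le; split; lra.
  - pose proof (exp_pos (- Rabs y)). pose proof (Rabs_pos a). pose proof (Rabs_pos b).
    pose proof (Rabs_pos p). pose proof (Rabs_pos c2). pose proof (pos_INR k).
    assert (0 <= INR k * Rabs a) by (apply Rmult_le_pos; auto).
    assert (0 <= INR k * Rabs p) by (apply Rmult_le_pos; auto).
    assert (0 <= w * exp (- Rabs y)) by (apply Rmult_le_pos; lra).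
    match goal with |- ?L <= ?R => replace L with
      (((2 * Rabs a + 10 * Rabs b + INR k * Rabs a + 20 * Rabs a + 2 * INR k * Rabs p)
        + / 2 * (Rabs c2 + Rabs b + 20 * Rabs b + 2 * INR k * Rabs a)) * (w * exp (- Rabs y))) by ring;
      replace R with ((22 * Rabs a + 31 * Rabs b + Rabs c2 + INR k * (3 * Rabs a + 2 * Rabs p)) * (w * exp (- Rabs y))) by ring end.
    apply Rmult_le_compat_r; lra.
Qed.

Lemma bndK (g : R -> R) C w c : 0 < w -> 0 <= c ->
  (forall y, Rabs (g y) <= C * w * exp (- c * Rabs y)) -> bnd g.
Proof.
  intros Hw Hc H. exists (Rabs C * w). intros y. specialize (H y).
  pose proof (exp_pos (- c * Rabs y)). pose proof (Rabs_pos y).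
  assert (exp (- c * Rabs y) <= 1). { rewrite <- exp_0. apply exp_le_mono. nra. }
  pose proof (Rle_abs C). pose proof (Rabs_pos C).
  eapply Rle_trans; [eassumption|]. 
  assert (C * w * exp (- c * Rabs y) <= Rabs C * w * exp (- c * Rabs y)).
  { apply Rmult_le_compat_r; [lra|]. apply Rmult_le_compat_r; lra. }
  assert (Rabs C * w * exp (- c * Rabs y) <= Rabs C * w * 1).
  { apply Rmult_le_compat_l; nra. }
  lra.
Qed.

Lemma smallc (al w Ca omega1 : R) : 0 < w -> w < Rmin omega1 (Rmin (1/8) (1 / (8 * (Rabs Ca + 1)))) ->
  0 < al -> Rabs (al - 8 / 9 * w) <= Ca * w ^ 2 -> 11/10 <= sqrt (2 - al ^ 2) - al.
Proof.
  intros Hw Hlt Hal Hb.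
  assert (w1 : w < 1/8). { apply (Rlt_le_trans _ _ _ Hlt). apply (Rle_trans _ (Rmin (1/8) (1/(8*(Rabs Ca+1))))); [apply Rmin_r | apply Rmin_l]. }
  assert (w2 : w < 1 / (8 * (Rabs Ca + 1))). { apply (Rlt_le_trans _ _ _ Hlt). apply (Rle_trans _ (Rmin (1/8) (1/(8*(Rabs Ca+1))))); [apply Rmin_r | apply Rmin_r]. }
  pose proof (Rabs_pos Ca). pose proof (Rle_abs Ca).
  assert (w3 : 8 * (Rabs Ca + 1) * w < 1).
  { apply (Rmult_lt_compat_l (8 * (Rabs Ca + 1))) in w2; [|lra].
    replace (8 * (Rabs Ca + 1) * (1 / (8 * (Rabs Ca + 1)))) with 1 in w2 by (field; lra). lra. }
  apply Rabs_le_between in Hb.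
  assert (Ca * w ^ 2 <= Rabs Ca * w * w) by (simpl; nra).
  assert (Rabs Ca * w * w <= w / 8) by nra.
  assert (al < 1/4) by lra.
  assert (27/20 <= sqrt (2 - al ^ 2)).
  { rewrite <- (sqrt_square (27/20)) by lra. apply sqrt_le_1_alt. simpl. nra. }
  lra.
Qed.

Theorem lemma4 (omega1 : R) (alpha : R -> R) (W1 W2 K2 K1 K0 : R -> R -> R) :
  0 < omega1 ->
  (* alpha(omega) > 0, smooth, alpha = 8/9 omega + O(omega^2) *)
  (forall w : R, 0 < w < omega1 -> 0 < alpha w) ->
  (forall (n : nat) (w : R), 0 < w < omega1 -> ex_derive_n alpha n w) ->
  (exists C : R, forall w : R, 0 < w < omega1 -> Rabs (alpha w - 8 / 9 * w) <= C * w ^ 2) ->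
  (* W1, W2 smooth, real, even *)
  (forall w : R, 0 < w < omega1 -> smooth (W1 w) /\ smooth (W2 w)) ->
  (forall w y : R, 0 < w < omega1 -> W1 w (- y) = W1 w y /\ W2 w (- y) = W2 w y) ->
  (* M+ W1 = lambda W2, M- W2 = lambda W1, lambda = 1 - alpha^2 *)
  (forall w y : R, 0 < w < omega1 ->
     Mplus_op w (W1 w) y = (1 - alpha w ^ 2) * W2 w y /\
     Mminus_op w (W2 w) y = (1 - alpha w ^ 2) * W1 w y) ->
  (* derivative bounds on W1, W2 *)
  (forall k : nat, exists C : R, forall w y : R, 0 < w < omega1 ->
     Rabs (Derive_n (W1 w) k y) <= C * (w ^ k * exp (- alpha w * Rabs y) + w * exp (- Rabs y)) /\
     Rabs (Derive_n (W2 w) k y) <= C * (w ^ k * exp (- alpha w * Rabs y) + w * exp (- Rabs y))) ->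
  (forall k : nat, exists C : R, forall w y : R, 0 < w < omega1 ->
     Rabs (Derive_n (fun z => W1 w z - W2 w z) k y)
       <= C * w * exp (- sqrt (2 - alpha w ^ 2) * Rabs y)) ->
  (exists C : R, forall w y : R, 0 < w < omega1 ->
     Rabs (W1 w y - exp (- alpha w * Rabs y)) <= C * w * exp (- alpha w * Rabs y) /\
     Rabs (W2 w y - exp (- alpha w * Rabs y)) <= C * w * exp (- alpha w * Rabs y)) ->
  (* K2, K1, K0 smooth, with U M+ M- = K U *)
  (forall w : R, 0 < w < omega1 -> smooth (K2 w) /\ smooth (K1 w) /\ smooth (K0 w)) ->
  (forall w : R, 0 < w < omega1 -> forall f : R -> R, smooth f -> forall y : R,
     Uop (W2 w) (Mplus_op w (Mminus_op w f)) y = Kop (K2 w) (K1 w) (K0 w) (Uop (W2 w) f) y) ->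
  (* coefficient bounds |d^k K_i| <~ omega e^{-(kappa - alpha)|y|} *)
  (forall k : nat, exists C : R, forall w y : R, 0 < w < omega1 ->
     Rabs (Derive_n (K2 w) k y) <= C * w * exp (- (sqrt (2 - alpha w ^ 2) - alpha w) * Rabs y) /\
     Rabs (Derive_n (K1 w) k y) <= C * w * exp (- (sqrt (2 - alpha w ^ 2) - alpha w) * Rabs y) /\
     Rabs (Derive_n (K0 w) k y) <= C * w * exp (- (sqrt (2 - alpha w ^ 2) - alpha w) * Rabs y)) ->
  exists omega0 : R, 0 < omega0 <= omega1 /\
    (forall w : R, 0 < w < omega0 -> forall h : R -> R, schwartz h ->
       let lhs := fun y => (2 * y * Derive h y + h y) * Kop (K2 w) (K1 w) (K0 w) h y in
       let i2 := fun y => (Derive_n h 2 y) ^ 2 in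
       let i1 := fun y => (Derive h y) ^ 2 in
       let iY1 := fun y => Y1 (K2 w) (K1 w) y * (Derive h y) ^ 2 in
       let iY0 := fun y => Y0 (K2 w) (K1 w) (K0 w) y * (h y) ^ 2 in
       integrable_R lhs /\ integrable_R i2 /\ integrable_R i1 /\
       integrable_R iY1 /\ integrable_R iY0 /\
       integral_R lhs = 4 * integral_R i2 + 4 * integral_R i1 + integral_R iY1 + integral_R iY0) /\
    (forall k : nat, exists C : R, forall w y : R, 0 < w < omega0 ->
       Rabs (Derive_n (Y1 (K2 w) (K1 w)) k y) + Rabs (Derive_n (Y0 (K2 w) (K1 w) (K0 w)) k y)
         <= C * w * exp (- Rabs y)).
Proof.
  intros Hw1 Hapos _ [Ca HCa] _ _ _ _ _ _ HKs _ HKb.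
  set (omega0 := Rmin omega1 (Rmin (1/8) (1 / (8 * (Rabs Ca + 1))))).
  assert (Hpos : 0 < omega0).
  { unfold omega0. pose proof (Rabs_pos Ca). repeat apply Rmin_glb_lt; try lra.
    apply Rdiv_lt_0_compat; lra. }
  assert (Hle : omega0 <= omega1) by apply Rmin_l.
  assert (Hw : forall w, 0 < w < omega0 -> 0 < w < omega1) by (intros w [? ?]; split; lra).
  assert (Hc : forall w, 0 < w < omega0 -> 11/10 <= sqrt (2 - alpha w ^ 2) - alpha w).
  { intros w Hw0. apply (smallc (alpha w) w Ca omega1); try tauto.
    apply Hapos; auto. apply HCa; auto. }
  assert (YB : forall k : nat, exists C : R, forall w y : R, 0 < w < omega0 ->
       Rabs (Derive_n (Y1 (K2 w) (K1 w)) k y) + Rabs (Derive_n (Y0 (K2 w) (K1 w) (K0 w)) k y)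
         <= C * w * exp (- Rabs y)).
  { intros k. destruct (HKb k) as [a Ha]. destruct (HKb (S k)) as [b Hb].
    destruct (HKb (pred k)) as [p Hp]. destruct (HKb (S (S k))) as [c2 Hc2].
    exists (22 * Rabs a + 31 * Rabs b + Rabs c2 + INR k * (3 * Rabs a + 2 * Rabs p)).
    intros w y Hw0. destruct (HKs w (Hw w Hw0)) as [S2 [S1 S0]].
    apply (Ybound (K2 w) (K1 w) (K0 w) w (sqrt (2 - alpha w ^ 2) - alpha w) a b p c2 k y); auto.
    all: first [tauto | apply Ha; auto | apply Hb; auto | apply Hp; auto | apply Hc2; auto]. }
  exists omega0. split; [lra|]. split; [|exact YB].
  intros w Hw0 h [Hs Hsch].
  destruct (HKs w (Hw w Hw0)) as [S2 [S1 S0]].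
  assert (Dc : forall (f : R -> R) n x, smooth f -> is_derive (Derive_n f n) x (Derive_n f (S n) x)).
  { intros f n x Sf. apply Derive_correct. apply smooth_ex; auto. }
  pose proof (Hc w Hw0) as Hcw.
  destruct (HKb 0%nat) as [C0 HC0]. destruct (HKb 1%nat) as [C1 HC1].
  destruct (YB 0%nat) as [CY HCY].
  assert (bY : bnd (Y1 (K2 w) (K1 w)) /\ bnd (Y0 (K2 w) (K1 w) (K0 w))).
  { split; exists (Rabs CY * w); intros y; specialize (HCY w y Hw0);
    pose proof (Rabs_pos (Derive_n (Y1 (K2 w) (K1 w)) 0 y));
    pose proof (Rabs_pos (Derive_n (Y0 (K2 w) (K1 w) (K0 w)) 0 y));
    pose proof (exp_pos (- Rabs y)); pose proof (Rabs_pos y);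
    assert (exp (- Rabs y) <= 1) by (rewrite <- exp_0; apply exp_le_mono; lra);
    pose proof (Rle_abs CY); pose proof (Rabs_pos CY);
    assert (CY * w * exp (- Rabs y) <= Rabs CY * w) by
      (apply Rle_trans with (Rabs CY * w * exp (- Rabs y));
       [apply Rmult_le_compat_r; [lra|]; apply Rmult_le_compat_r; lra
       | assert (0 <= Rabs CY * w) by (apply Rmult_le_pos; lra); nra]);
    simpl in *; lra. }
  destruct bY as [bY1 bY0].
  exact (abstract_identity h (Derive h) (Derive_n h 2) (Derive_n h 3) (Derive_n h 4)
    (K2 w) (Derive (K2 w)) (Derive_n (K2 w) 2) (K1 w) (Derive (K1 w)) (K0 w) (Derive (K0 w))
    (fun x => Dc h 0%nat x Hs) (fun x => Dc h 1%nat x Hs) (fun x => Dc h 2%nat x Hs) (fun x => Dc h 3%nat x Hs)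
    (fun x => smooth_ex h 4 x Hs)
    (fun x => Dc (K2 w) 0%nat x S2) (fun x => Dc (K2 w) 1%nat x S2) (fun x => smooth_ex (K2 w) 2 x S2)
    (fun x => Dc (K1 w) 0%nat x S1) (fun x => smooth_ex (K1 w) 1 x S1)
    (fun x => Dc (K0 w) 0%nat x S0) (fun x => smooth_ex (K0 w) 1 x S0)
    (schw_dec h 0 Hsch) (schw_dec h 1 Hsch) (schw_dec h 2 Hsch) (schw_dec h 3 Hsch)
    (schw_bnd1 h 0 Hsch) (schw_bnd1 h 1 Hsch) (schw_bnd1 h 2 Hsch)
    (bndK _ C0 w (sqrt (2 - alpha w ^ 2) - alpha w) (proj1 Hw0) ltac:(lra) (fun y => proj1 (HC0 w y (Hw w Hw0))))
    (bndK _ C1 w (sqrt (2 - alpha w ^ 2) - alpha w) (proj1 Hw0) ltac:(lra) (fun y => proj1 (HC1 w y (Hw w Hw0))))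
    (bndK _ C0 w (sqrt (2 - alpha w ^ 2) - alpha w) (proj1 Hw0) ltac:(lra) (fun y => proj1 (proj2 (HC0 w y (Hw w Hw0)))))
    (bndK _ C0 w (sqrt (2 - alpha w ^ 2) - alpha w) (proj1 Hw0) ltac:(lra) (fun y => proj2 (proj2 (HC0 w y (Hw w Hw0)))))
    bY1 bY0).
Qed.
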